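(* Let $h:X\to\mathbb{R}$ be convex and continuous and $f=g+h$. Let $x_0\in X$, let $\beta_i\ge 2\mathcal{L}$ for all $i\ge0$, and define the iterates $x_i=\mathrm{Prox}^h_{\beta_{i-1}}(\nabla G(x_{i-1},\omega_i),x_{i-1};x_0)$, $i=1,\dots,N$, and $\widehat x_N=\big[\sum_{i=1}^N\beta_{i-1}^{-1}\big]^{-1}\sum_{i=1}^N\beta_{i-1}^{-1}x_i$. Put $\zeta_i=\nabla G(x_{i-1},\omega_i)-\nabla g(x_{i-1})$ and $V=V_{x_0}$. Then there exist points $z_0=x_0,z_1,\dots,z_{N-1}\in X$, with $z_i$ a (measurable) function of $x_0,\zeta_1,\dots,\zeta_i$ only, such that for every realization and every $z\in X$, $$\Big[\sum_{i=1}^N\beta_{i-1}^{-1}\Big][f(\widehat x_N)-f(z)]\le\sum_{i=1}^N\beta_{i-1}^{-1}[f(x_i)-f(z)]\le V(x_0,z)-V(x_N,z)+\sum_{i=1}^N\Big[\frac{\langle\zeta_i,z-x_{i-1}\rangle}{\beta_{i-1}}+\frac{\|\zeta_i\|_*^2}{\beta_{i-1}^2}\Big]$$ $$\le 2V(x_0,z)+\sum_{i=1}^N\Big[\frac{\langle\zeta_i,z_{i-1}-x_{i-1}\rangle}{\beta_{i-1}}+\frac32\,\frac{\|\zeta_i\|_*^2}{\beta_{i-1}^2}\Big].$$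
   Context: $E$ is a finite-dimensional real Euclidean space with inner product $\langle\cdot,\cdot\rangle$; $\|\cdot\|$ is a norm on $E$ with conjugate norm $\|s\|_*=\max\{\langle s,x\rangle:\|x\|\le1\}$. $X\subset E$ is convex and closed with nonempty interior. $G:X\times\Omega\to\mathbb{R}$ with $G(\cdot,\omega)$ differentiable, $g(x)=\mathbb{E}\{G(x,\omega)\}$ finite, convex, differentiable on $X$ with $\|\nabla g(x)-\nabla g(x')\|_*\le\mathcal{L}\|x-x'\|$. $\omega_1,\omega_2,\dots$ are i.i.d. copies of $\omega$. $\vartheta:E\to\mathbb{R}$ is continuously differentiable, convex, with $\langle\nabla\vartheta(x)-\nabla\vartheta(x'),x-x'\rangle\ge\|x-x'\|^2$, and $\vartheta(x)\ge\vartheta(0)=0$. Bregman divergence: $V_{x_0}(x,z)=\vartheta(z-x_0)-\vartheta(x-x_0)-\langle\nabla\vartheta(x-x_0),z-x\rangle$. Composite proximal mapping: $\mathrm{Prox}^h_\beta(u,x;x_0)=\arg\min_{z\in X}\{\langle u,z\rangle+h(z)+\beta V_{x_0}(x,z)\}$. *)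

(* Defs.v *)
(* mathcomp-analysis over an abstract R : realType.
   E is modelled as 'rV[R]_n with the standard inner product. *)
From HB Require Import structures.
From mathcomp Require Import all_boot all_order all_algebra.
From mathcomp Require Import all_classical all_reals all_analysis.
Set Implicit Arguments. Unset Strict Implicit. Unset Printing Implicit Defensive.
Import Order.TTheory GRing.Theory Num.Theory.
Import numFieldNormedType.Exports.
Local Open Scope classical_set_scope.
Local Open Scope ring_scope.

Section Defs.
Variables (R : realType) (n : nat).
Local Notation E := 'rV[R]_n.

Definition ip (u v : E) : R := \sum_(k < n) u ord0 k * v ord0 k.

Definition is_norm (nrm : E -> R) : Prop :=
  [/\ forall x, 0 <= nrm x,
      forall x, nrm x = 0 -> x = 0,
      forall (a : R) x, nrm (a *: x) = `|a| * nrm x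
    & forall x y, nrm (x + y) <= nrm x + nrm y].

Definition dual_norm (nrm : E -> R) (s : E) : R :=
  sup [set ip s x | x in [set x | nrm x <= 1]].

Definition is_grad_within (X : set E) (F : E -> R) (x d : E) : Prop :=
  forall e : R, 0 < e -> exists2 del : R, 0 < del &
    forall y, X y -> `|y - x| < del ->
      `|F y - F x - ip d (y - x)| <= e * `|y - x|.

Definition breg (th : E -> R) (dth : E -> E) (x0 x z : E) : R :=
  th (z - x0) - th (x - x0) - ip (dth (x - x0)) (z - x).

Definition is_prox (X : set E) (th : E -> R) (dth : E -> E) (h : E -> R)
  (beta : R) (u x x0 p : E) : Prop :=
  X p /\ forall z, X z ->
    ip u p + h p + beta * breg th dth x0 x p <=
    ip u z + h z + beta * breg th dth x0 x z.

End Defs.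

Definition borel_measurable (T U : topologicalType) (f : T -> U) : Prop :=
  forall A : set U, open A -> <<s open >> (f @^-1` A).

(* Main.v *)
Require Import Defs.
From HB Require Import structures.
From mathcomp Require Import all_boot all_order all_algebra.
From mathcomp Require Import all_classical all_reals all_analysis.
Import Order.TTheory GRing.Theory Num.Theory.
Import numFieldNormedType.Exports.
Local Open Scope classical_set_scope.
Local Open Scope ring_scope.
From mathcomp Require Import ring lra.

Set Implicit Arguments. Unset Strict Implicit. Unset Printing Implicit Defensive.

Section IP.
Variables (R : realType) (n : nat).
Local Notation E := 'rV[R]_n.
Implicit Types (x y z u v w : E).

Lemma ipDl u v w : ip (u + v) w = ip u w + ip v w.
Proof. by rewrite /ip -big_split; apply: eq_bigr => k _; rewrite !mxE mulrDl. Qed.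
Lemma ipDr u v w : ip w (u + v) = ip w u + ip w v.
Proof. by rewrite /ip -big_split; apply: eq_bigr => k _; rewrite !mxE mulrDr. Qed.
Lemma ipZl a u w : ip (a *: u) w = a * ip u w.
Proof. by rewrite /ip mulr_sumr; apply: eq_bigr => k _; rewrite !mxE mulrA. Qed.
Lemma ipZr a u w : ip w (a *: u) = a * ip w u.
Proof. by rewrite /ip mulr_sumr; apply: eq_bigr => k _; rewrite !mxE mulrCA. Qed.
Lemma ipNl u w : ip (- u) w = - ip u w.
Proof. by rewrite -scaleN1r ipZl mulN1r. Qed.
Lemma ipNr u w : ip w (- u) = - ip w u.
Proof. by rewrite -scaleN1r ipZr mulN1r. Qed.
Lemma ipBl u v w : ip (u - v) w = ip u w - ip v w.
Proof. by rewrite ipDl ipNl. Qed.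
Lemma ipBr u v w : ip w (u - v) = ip w u - ip w v.
Proof. by rewrite ipDr ipNr. Qed.
Lemma ip0l w : ip 0 w = 0.
Proof. by rewrite -(scale0r 0) ipZl mul0r. Qed.
Lemma ip0r w : ip w 0 = 0.
Proof. by rewrite -(scale0r 0) ipZr mul0r. Qed.

Lemma mx_entry_le m p (A : 'M[R]_(m, p)) i j : `|A i j| <= `|A|.
Proof.
rewrite (_ : `|A| = mx_norm A) // mx_normrE; apply/bigmax_geP; right => /=.
by exists (i, j).
Qed.

Lemma mx_norm_le m p (A : 'M[R]_(m, p)) e : 0 <= e ->
  (forall i j, `|A i j| <= e) -> `|A| <= e.
Proof.
move=> e0 H; rewrite (_ : `|A| = mx_norm A) // mx_normrE; apply/bigmax_leP; split => //.
Qed.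

Lemma ip_le u v : `|ip u v| <= n%:R * `|u| * `|v|.
Proof.
rewrite /ip (le_trans (ler_norm_sum _ _ _)) //.
apply: (@le_trans _ _ (\sum_(k < n) (`|u| * `|v|))).
  apply: ler_sum => k _; rewrite normrM; apply: ler_pM => //; exact: mx_entry_le.
by rewrite sumr_const card_ord -mulrA mulr_natl.
Qed.

End IP.

Section Reals.
Variable R : realType.
Implicit Types (x y A B C K : R).

Lemma le0_eps x K : (forall e : R, 0 < e -> x <= e * K) -> x <= 0.
Proof.
move=> H; rewrite leNgt; apply/negP => x0.
have [K0|K0] := leP K 0.
  by have := H 1 ltr01; rewrite mul1r => /le_trans/(_ K0); rewrite leNgt x0.
have := H (x / (2 * K)) (divr_gt0 x0 (mulr_gt0 (ltr0Sn _ 1) K0)).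
have -> : x / (2 * K) * K = x / 2 by field; rewrite gt_eqF.
lra.
Qed.

Lemma lim_m A B C : (forall m : nat, (0 < m)%N -> A <= B + C / m%:R) -> A <= B.
Proof.
move=> H; apply/ler_addgt0Pr => e e0.
have [C0|C0] := leP C 0.
  by have := H 1%N isT; rewrite divr1; lra.
apply: le_trans (H (Num.truncn (C / e)).+1 isT) _; rewrite lerD2l.
rewrite ler_pdivrMr ?ltr0n // mulrC -ler_pdivrMr //; exact/ltW/truncnS_gt.
Qed.

Lemma young_ineq (a b r : R) : 0 < b -> a * r - b * r ^+ 2 / 4 <= a ^+ 2 / b.
Proof.
move=> b0; rewrite -subr_ge0.
have -> : a ^+ 2 / b - (a * r - b * r ^+ 2 / 4) = (a - b * r / 2) ^+ 2 / b.
  by field; rewrite gt_eqF.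
by apply: divr_ge0 => //; [exact: sqr_ge0 | exact: ltW].
Qed.

End Reals.

Section Cont.
Variables (R : realType) (V W : normedModType R).

Lemma cont_bound (f : V -> W) :
  (forall x, exists2 d : R, 0 < d & exists K : R, forall y, `|x - y| < d ->
     `|f x - f y| <= K * `|x - y|) -> continuous f.
Proof.
move=> H x; apply/cvgrPdist_le => e e0.
have [d d0 [K HK]] := H x.
pose r : R := Num.min d (e / (`|K| + 1)).
have r0 : 0 < r by rewrite /r lt_min d0 divr_gt0 // ltr_pwDr.
have rd : r <= d by rewrite /r ge_min lexx.
have re : r <= e / (`|K| + 1) by rewrite /r ge_min lexx orbT.
apply/nbhs_normP; exists r => // y /= yr.
apply: (le_trans (HK y (lt_le_trans yr rd))); apply: (le_trans (ler_norm _ )).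
rewrite normrM normr_id; apply: (@le_trans _ _ (`|K| * (e / (`|K| + 1)))).
  by rewrite ler_wpM2l // ltW // (lt_le_trans yr re).
have K0 := normr_ge0 K.
rewrite mulrA ler_pdivrMr; last by rewrite ltr_pwDr.
nra.
Qed.

End Cont.

Section Norm.
Variables (R : realType) (n : nat) (nrm : 'rV[R]_n -> R).
Hypothesis hn : is_norm nrm.
Local Notation E := 'rV[R]_n.
Implicit Types (x y z u v w : E).

Lemma nrm_ge0 x : 0 <= nrm x. Proof. by case: hn. Qed.
Lemma nrmZ a x : nrm (a *: x) = `|a| * nrm x. Proof. by case: hn. Qed.
Lemma nrm_tri x y : nrm (x + y) <= nrm x + nrm y. Proof. by case: hn. Qed.
Lemma nrm_eq0 x : nrm x = 0 -> x = 0. Proof. by case: hn => _ H _ _; exact: H. Qed.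
Lemma nrm0 : nrm 0 = 0.
Proof. by rewrite -(scale0r (0 : E)) nrmZ normr0 mul0r. Qed.
Lemma nrmN x : nrm (- x) = nrm x.
Proof. by rewrite -scaleN1r nrmZ normrN normr1 mul1r. Qed.
Lemma nrmB x y : nrm (x - y) = nrm (y - x).
Proof. by rewrite -nrmN opprB. Qed.

Lemma nrm_sum m (F : 'I_m -> E) : nrm (\sum_(i < m) F i) <= \sum_(i < m) nrm (F i).
Proof.
elim/big_ind2 : _ => [|a b c d H1 H2|i _]; first by rewrite nrm0.
  by apply: (le_trans (nrm_tri _ _)); exact: lerD.
by [].
Qed.

Definition Cn := \sum_(k < n) nrm (delta_mx 0 k : E).

Lemma Cn_ge0 : 0 <= Cn.
Proof. by apply: sumr_ge0 => k _; exact: nrm_ge0. Qed.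

Lemma nrm_le x : nrm x <= Cn * `|x|.
Proof.
rewrite {1}(row_sum_delta x); apply: (le_trans (nrm_sum _)).
rewrite /Cn mulr_suml; apply: ler_sum => k _; rewrite nrmZ mulrC.
by apply: ler_wpM2l; [exact: nrm_ge0 | exact: mx_entry_le].
Qed.

Lemma nrm_cont : continuous nrm.
Proof.
apply: cont_bound => x; exists 1 => //; exists Cn => y _.
apply: (le_trans _ (nrm_le _)); rewrite ler_norml.
have h1 := nrm_tri (x - y) y; have h2 := nrm_tri (y - x) x.
rewrite subrK in h1; rewrite subrK nrmB in h2.
by apply/andP; split; lra.
Qed.

Lemma nrm_lb : exists2 c, 0 < c & forall x, c * `|x| <= nrm x.
Proof.
pose S := [set x : E | `|x| = 1].
have SN : forall x, x != 0 -> S (`|x|^-1 *: x).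
  move=> x x0; rewrite /S /= normrZ normrV ?unitfE ?normr_eq0 // normr_id.
  by rewrite mulVf // normr_eq0.
have key : forall c, 0 < c -> (forall s, S s -> c <= nrm s) ->
    forall x, c * `|x| <= nrm x.
  move=> c c0 H x; have [->|x0] := eqVneq x 0; first by rewrite normr0 mulr0 nrm0.
  have := H _ (SN x x0); rewrite nrmZ normrV ?unitfE ?normr_eq0 // normr_id.
  by rewrite ler_pdivlMl ?normr_gt0 // mulrC.
have [[s0 Ss0]|S0] := pselect (S !=set0); last first.
  exists 1 => //; apply: key => // s Ss; exfalso; apply: S0; by exists s.
have cS : compact S.
  apply: bounded_closed_compact.
    exists 1; split => // M M1 x Sx /=; rewrite Sx; exact: ltW.
  have := @preimage_closed _ _ (fun x : E => `|x|) _ _ (@closed_eq R 1).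
  by apply => x _; exact: norm_continuous.
have [c /set_mem Sc cmin] := EVT_min_rV (ex_intro _ s0 Ss0 : S !=set0) cS
  (continuous_subspaceT nrm_cont).
have c0 : 0 < nrm c.
  rewrite lt_neqAle nrm_ge0 andbT eq_sym; apply/eqP => /nrm_eq0 c0.
  by move: Sc; rewrite /S /= c0 normr0 => /esym/eqP; rewrite oner_eq0.
exists (nrm c) => //; apply: key => // s Ss; apply: cmin; exact/mem_set.
Qed.

Lemma dn_hassup s : has_sup [set ip s x | x in [set x | nrm x <= 1]].
Proof.
split; first by exists 0, 0; rewrite /= ?nrm0 ?ip0r.
have [c c0 Hc] := nrm_lb.
exists (n%:R * `|s| / c) => _ [x /= x1 <-].
apply: (le_trans (ler_norm _)); apply: (le_trans (ip_le _ _)).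
apply: ler_wpM2l; first by rewrite mulr_ge0.
rewrite -(ler_pM2l c0) mulfV ?gt_eqF //; exact: (le_trans (Hc x) x1).
Qed.

Lemma dn_ge0 s : 0 <= dual_norm nrm s.
Proof.
apply: sup_upper_bound; first exact: dn_hassup.
by exists 0; rewrite /= ?nrm0 ?ip0r.
Qed.

Lemma dn_ub s x : ip s x <= dual_norm nrm s * nrm x.
Proof.
have [->|x0] := eqVneq x 0; first by rewrite ip0r nrm0 mulr0.
have nx0 : 0 < nrm x.
  by rewrite lt_neqAle nrm_ge0 andbT eq_sym; apply/eqP => /nrm_eq0/eqP; rewrite (negbTE x0).
have H : ip s ((nrm x)^-1 *: x) <= dual_norm nrm s.
  apply: sup_upper_bound; first exact: dn_hassup.
  exists ((nrm x)^-1 *: x) => //=.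
  by rewrite nrmZ ger0_norm ?invr_ge0 ?nrm_ge0 // mulVf ?gt_eqF.
by move: H; rewrite ipZr mulrC ler_pdivrMr.
Qed.
End Norm.

Section Cvx.
Variables (R : realType) (n : nat).
Local Notation E := 'rV[R]_n.
Implicit Types (x y z u v w : E).

Lemma cvx_set_pt (X : set E) x y (t : R) : convex_set X -> X x -> X y ->
  0 <= t -> t <= 1 -> X (t *: x + (1 - t) *: y).
Proof.
move=> H Xx Xy t0 t1.
have := H x y (Itv01 t0 t1) (mem_set Xx) (mem_set Xy).
by move/set_mem.
Qed.

Lemma cvx_fun_pt (X : set E) (f : E -> R) x y (t : R) : convex_function X f ->
  X x -> X y -> 0 <= t -> t <= 1 ->
  f (t *: x + (1 - t) *: y) <= t * f x + (1 - t) * f y.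
Proof.
move=> H Xx Xy t0 t1.
exact: (H (Itv01 t0 t1) x y (mem_set Xx) (mem_set Xy)).
Qed.

Lemma seg_diff x z (t : R) : t *: z + (1 - t) *: x - x = t *: (z - x).
Proof. by apply/rowP => k; rewrite !mxE; ring. Qed.

Lemma seg_t (d N : R) : 0 < d -> 0 <= N -> exists t : R, [/\ 0 < t, t <= 1 & t * N < d].
Proof.
move=> d0 N0; exists (d / (d + N)); split.
- by rewrite divr_gt0 // ltr_wpDr.
- by rewrite ler_pdivrMr ?ltr_wpDr // mul1r lerDl.
- rewrite mulrAC ltr_pdivrMr ?ltr_wpDr //; nra.
Qed.

Lemma grad_ineq (D : set E) (F : E -> R) x z d : convex_set D -> convex_function D F ->
  D x -> D z -> is_grad_within D F x d -> F x + ip d (z - x) <= F z.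
Proof.
move=> cD cF Dx Dz G.
suff : ip d (z - x) - (F z - F x) <= 0 by lra.
apply: (@le0_eps _ _ `|z - x|) => e e0.
have [del del0 Hd] := G e e0.
have [t [t0 t1 tN]] := seg_t del0 (normr_ge0 (z - x)).
pose y := t *: z + (1 - t) *: x.
have Dy : D y by apply: cvx_set_pt => //; exact: ltW.
have yx : y - x = t *: (z - x) by exact: seg_diff.
have ny : `|y - x| = t * `|z - x| by rewrite yx normrZ ger0_norm // ltW.
have := Hd y Dy; rewrite ny => /(_ tN).
rewrite yx ipZr => /ler_normlP [h1 h2].
have h3 : F y <= t * F z + (1 - t) * F x by apply: cvx_fun_pt => //; exact: ltW.
rewrite -(ler_pM2l t0).
nra.
Qed.
End Cvx.

Lemma convex_setT_rV (R : realType) n : convex_set (setT : set 'rV[R]_n).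
Proof. by move=> x y l _ _; rewrite in_setE. Qed.

Section Th.
Variables (R : realType) (n : nat) (nrm : 'rV[R]_n -> R).
Variables (th : 'rV[R]_n -> R) (dth : 'rV[R]_n -> 'rV[R]_n).
Hypothesis hn : is_norm nrm.
Hypothesis hgrad : forall x, is_grad_within setT th x (dth x).
Hypothesis hcvx : convex_function setT th.
Hypothesis hmono : forall x x', nrm (x - x') ^+ 2 <= ip (dth x - dth x') (x - x').
Local Notation E := 'rV[R]_n.
Implicit Types (x y z u v w : E).

Lemma strong_cvx a b : th b + ip (dth b) (a - b) + nrm (a - b) ^+ 2 / 2 <= th a.
Proof.
pose w := a - b; pose Q := ip (dth b) w; pose Nq := nrm w ^+ 2.
have Nq0 : 0 <= Nq by rewrite /Nq sqr_ge0.
apply: (@lim_m _ _ _ (Nq / 2)) => m m0.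
pose M : R := m%:R.
have M0 : 0 < M by rewrite ltr0n.
pose y k := b + (k%:R / M) *: w.
have claim : forall k, (k <= m)%N ->
    th b + k%:R / M * Q + Nq * (k%:R * (k%:R - 1)) / (2 * M ^+ 2) <= th (y k).
  elim => [_|k IH km].
    by rewrite /y (_ : (0%:R : R) = 0) // !mul0r scale0r !addr0 mulr0 mul0r addr0.
  have {IH} IH := IH (ltnW km).
  pose K : R := k%:R; pose P := ip (dth (y k)) w.
  have gi := grad_ineq (@convex_setT_rV R n) hcvx (I : setT (y k)) (I : setT (y k.+1)) (hgrad (y k)).
  have ed : y k.+1 - y k = M^-1 *: w.
    by apply/rowP => j; rewrite /y !mxE -natr1; field; rewrite gt_eqF.
  have mono' : K / M * Nq <= P - Q.
    have [k0|kpos] := eqVneq k 0%N.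
      rewrite /K k0 mul0r mul0r subr_ge0 /P /Q /y k0 mul0r scale0r addr0 //.
    have h := hmono (y k) b.
    have eyb : y k - b = (K / M) *: w by rewrite /y addrAC subrr add0r.
    have s0 : 0 < K / M by rewrite divr_gt0 // ltr0n lt0n.
    rewrite eyb nrmZ // ipZr ipBl -/P -/Q ger0_norm in h; last exact: ltW.
    rewrite exprMn -/Nq in h.
    rewrite -(ler_pM2l s0); nra.
  move: gi; rewrite ed ipZr -/P => gi.
  rewrite -natr1 -/K.
  have e1 : (K + 1) / M * Q + Nq * ((K + 1) * (K + 1 - 1)) / (2 * M ^+ 2) =
    K / M * Q + Nq * (K * (K - 1)) / (2 * M ^+ 2) + (Q / M + (K / M * Nq) / M).
    by field; rewrite gt_eqF.
  have e2 : Q / M + (K / M * Nq) / M <= M^-1 * P.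
    by rewrite -mulrDl [M^-1 * P]mulrC ler_pM2r ?invr_gt0 //; lra.
  rewrite -/K in IH; lra.
have := claim m (leqnn m).
have -> : y m = a by rewrite /y divff ?gt_eqF // scale1r /w addrC subrK.
have -> : Nq * (m%:R * (m%:R - 1)) / (2 * M ^+ 2) = Nq / 2 - Nq / 2 / m%:R.
  by rewrite -/M; field; rewrite gt_eqF.
rewrite -/M divff ?gt_eqF // mul1r.
rewrite /Q /Nq /w; lra.
Qed.

Lemma breg_lb x0 x z : nrm (z - x) ^+ 2 / 2 <= breg th dth x0 x z.
Proof.
have := strong_cvx (z - x0) (x - x0).
have -> : z - x0 - (x - x0) = z - x by apply/rowP => k; rewrite !mxE; ring.
rewrite /breg; lra.
Qed.

Lemma breg_ge0 x0 x z : 0 <= breg th dth x0 x z.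
Proof.
apply: le_trans (breg_lb x0 x z); apply: divr_ge0 => //; exact: sqr_ge0.
Qed.

Lemma three_point x0 x p z :
  breg th dth x0 x z - breg th dth x0 p z - breg th dth x0 x p =
  ip (dth (p - x0) - dth (x - x0)) (z - p).
Proof. rewrite /breg !ipBr !ipBl; ring. Qed.

Lemma opt_cond x0 (D : set E) (F : E -> R) (a p : E) (b : R) :
  convex_set D -> convex_function D F -> D p -> 0 <= b ->
  (forall y, D y -> ip a p + F p + b * th (p - x0) <= ip a y + F y + b * th (y - x0)) ->
  forall z, D z -> 0 <= ip a (z - p) + F z - F p + b * ip (dth (p - x0)) (z - p).
Proof.
move=> cD cF Dp b0 Hmin z Dz.
rewrite -oppr_le0.
apply: (@le0_eps _ _ (b * `|z - p|)) => e e0.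
have [del del0 Hd] := hgrad (p - x0) e0.
have [t [t0 t1 tN]] := seg_t del0 (normr_ge0 (z - p)).
pose y := t *: z + (1 - t) *: p.
have Dy : D y by apply: cvx_set_pt => //; exact: ltW.
have yx : y - p = t *: (z - p) by exact: seg_diff.
have yx' : (y - x0) - (p - x0) = t *: (z - p).
  by rewrite -yx; apply/rowP => k; rewrite !mxE; ring.
have ny : `|(y - x0) - (p - x0)| = t * `|z - p| by rewrite yx' normrZ ger0_norm // ltW.
have := Hd (y - x0) I; rewrite ny => /(_ tN).
rewrite yx' ipZr => /ler_normlP [h1 h2].
have h3 : F y <= t * F z + (1 - t) * F p by apply: cvx_fun_pt => //; exact: ltW.
have h4 := Hmin y Dy.
have h5 : ip a y = ip a p + t * ip a (z - p).
  by rewrite -ipZr -yx ipBr; ring.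
rewrite h5 in h4.
have h6 : b * (th (y - x0) - th (p - x0)) <=
    b * (t * ip (dth (p - x0)) (z - p) + e * (t * `|z - p|))
  by rewrite ler_wpM2l //; lra.
rewrite -(ler_pM2l t0).
nra.
Qed.
End Th.

Section Smooth.
Variables (R : realType) (n : nat) (nrm : 'rV[R]_n -> R).
Variables (X : set 'rV[R]_n) (g : 'rV[R]_n -> R) (dg : 'rV[R]_n -> 'rV[R]_n) (L : R).
Hypothesis hn : is_norm nrm.
Hypothesis cX : convex_set X.
Hypothesis cg : convex_function X g.
Hypothesis gg : forall x, X x -> is_grad_within X g x (dg x).
Hypothesis lip : forall x x', X x -> X x' -> dual_norm nrm (dg x - dg x') <= L * nrm (x - x').
Local Notation E := 'rV[R]_n.
Implicit Types (x y z u v w : E).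

Lemma smooth x p : X x -> X p -> g p <= g x + ip (dg x) (p - x) + L / 2 * nrm (p - x) ^+ 2.
Proof.
move=> Xx Xp.
pose w := p - x; pose Q := ip (dg x) w; pose Nq := nrm w ^+ 2.
have Nq0 : 0 <= Nq by rewrite /Nq sqr_ge0.
apply: (@lim_m _ _ _ (L * Nq / 2)) => m m0.
pose M : R := m%:R.
have M0 : 0 < M by rewrite ltr0n.
pose y k := x + (k%:R / M) *: w.
have Xy : forall k, (k <= m)%N -> X (y k).
  move=> k km.
  have -> : y k = (k%:R / M) *: p + (1 - k%:R / M) *: x.
    by apply/rowP => j; rewrite /y /w !mxE; ring.
  apply: cvx_set_pt => //; first by rewrite divr_ge0 // ler0n.
  by rewrite ler_pdivrMr // mul1r ler_nat.
have claim : forall k, (k <= m)%N ->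
    g (y k) <= g x + k%:R / M * Q + L * Nq * (k%:R * (k%:R + 1)) / (2 * M ^+ 2).
  elim => [_|k IH km].
    by rewrite /y (_ : (0%:R : R) = 0) // !mul0r scale0r !addr0 mulr0 mul0r addr0.
  have {IH} IH := IH (ltnW km).
  pose K : R := k%:R; pose P := ip (dg (y k.+1)) w.
  have gi := grad_ineq cX cg (Xy _ km) (Xy _ (ltnW km)) (gg (Xy _ km)).
  have ed : y k - y k.+1 = - (M^-1 *: w).
    by apply/rowP => j; rewrite /y !mxE -natr1; field; rewrite gt_eqF.
  move: gi; rewrite ed ipNr ipZr -/P => gi.
  have lp : P - Q <= L * ((K + 1) / M) * Nq.
    rewrite /P /Q -ipBl.
    apply: (le_trans (dn_ub hn _ _)).
    have eyx : y k.+1 - x = ((K + 1) / M) *: w.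
      by apply/rowP => j; rewrite /y !mxE /K -natr1; ring.
    have := lip (Xy _ km) Xx; rewrite eyx nrmZ // ger0_norm; last first.
      by apply: divr_ge0; [rewrite addr_ge0 // ler0n | exact: ltW].
    move=> h; have nw := nrm_ge0 hn w; rewrite /Nq expr2.
    have := ler_wpM2r nw h; rewrite -/w; lra.
  rewrite -natr1 -/K.
  have e1 : g x + (K + 1) / M * Q + L * Nq * ((K + 1) * (K + 1 + 1)) / (2 * M ^+ 2) =
    g x + K / M * Q + L * Nq * (K * (K + 1)) / (2 * M ^+ 2) + (Q / M + (L * ((K + 1) / M) * Nq) / M).
    by field; rewrite gt_eqF.
  have e2 : M^-1 * P <= Q / M + (L * ((K + 1) / M) * Nq) / M.
    by rewrite -mulrDl [M^-1 * P]mulrC ler_pM2r ?invr_gt0 //; lra.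
  rewrite -/K in IH; lra.
have := claim m (leqnn m).
have -> : y m = p by rewrite /y divff ?gt_eqF // scale1r /w addrC subrK.
have -> : L * Nq * (m%:R * (m%:R + 1)) / (2 * M ^+ 2) = L / 2 * Nq + L * Nq / 2 / m%:R.
  by rewrite -/M; field; rewrite gt_eqF.
rewrite -/M divff ?gt_eqF // mul1r.
rewrite /Q /Nq /w; lra.
Qed.
End Smooth.

Section Ymap.
Variables (R : realType) (n : nat) (nrm : 'rV[R]_n -> R).
Variables (th : 'rV[R]_n -> R) (dth : 'rV[R]_n -> 'rV[R]_n) (x0 : 'rV[R]_n).
Variable X : set 'rV[R]_n.
Hypothesis hn : is_norm nrm.
Hypothesis hgrad : forall x, is_grad_within setT th x (dth x).
Hypothesis hcvx : convex_function setT th.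
Hypothesis hmono : forall x x', nrm (x - x') ^+ 2 <= ip (dth x - dth x') (x - x').
Hypothesis th0 : th 0 = 0.
Hypothesis cX : convex_set X.
Hypothesis clX : closed X.
Hypothesis Xx0 : X x0.
Hypothesis hdc : continuous dth.
Local Notation E := 'rV[R]_n.
Implicit Types (x y z u v w : E).

Definition psi u y := th (y - x0) - ip u y.

Lemma psi_cont u : continuous (psi u).
Proof.
apply: cont_bound => x.
have [d d0 Hd] := hgrad (x - x0) ltr01.
exists d => //; exists (n%:R * `|dth (x - x0)| + 1 + n%:R * `|u|) => y xy.
have e1 : (y - x0) - (x - x0) = y - x by apply/rowP => k; rewrite !mxE; ring.
have := Hd (y - x0) I; rewrite e1 distrC => /(_ xy) h.
have h2 := ip_le (dth (x - x0)) (y - x).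
have h3 := ip_le u (x - y).
have ny : `|y - x| = `|x - y| by rewrite distrC.
rewrite ny in h h2.
have e2 : psi u x - psi u y = - (th (y - x0) - th (x - x0) - ip (dth (x - x0)) (y - x))
   - ip (dth (x - x0)) (y - x) - ip u (x - y).
  by rewrite /psi ipBr ipBr; ring.
rewrite e2.
apply: (le_trans (ler_normD _ _)); apply: (le_trans (lerD (ler_normD _ _) (lexx _))).
rewrite !normrN.
nra.
Qed.

Lemma psi_min_ex u : exists p, X p /\ forall y, X y -> psi u p <= psi u y.
Proof.
pose A := [set y | X y /\ psi u y <= psi u x0].
have [c c0 Hc] := nrm_lb hn.
pose D := dual_norm nrm (u - dth 0).
have D0 : 0 <= D by exact: dn_ge0.
have bA : forall y, A y -> `|y| <= 2 * D / c + `|x0|.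
  move=> y [Xy hy].
  have sc := strong_cvx hn hgrad hcvx hmono (y - x0) 0.
  rewrite th0 subr0 add0r in sc.
  have hd := dn_ub hn (u - dth 0) (y - x0).
  move: hy; rewrite /psi subrr th0 => hy.
  rewrite ipBl [ip u _]ipBr in hd.
  set r := nrm (y - x0) in sc hd.
  have r0 : 0 <= r by exact: nrm_ge0.
  have rD : r <= 2 * D.
    rewrite -/D in hd.
    have : r ^+ 2 <= 2 * D * r by lra.
    have [->|rpos] := eqVneq r 0; first by rewrite mulr2n; lra.
    rewrite expr2 ler_pM2r //; rewrite lt_neqAle eq_sym rpos r0 //.
  have := Hc (y - x0); rewrite -/r => h.
  have : `|y - x0| <= 2 * D / c.
    by rewrite ler_pdivlMr // mulrC; lra.
  have := ler_normD (y - x0) x0; rewrite subrK; lra.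
have cA : compact A.
  apply: bounded_closed_compact.
    exists (2 * D / c + `|x0|); split; first exact: num_real.
    by move=> M HM y Ay /=; apply: (le_trans (bA y Ay)); exact: ltW.
  apply: closedI => //.
  have := @preimage_closed _ _ (psi u) _ _ (@closed_le R (psi u x0)).
  by apply => x _; exact: psi_cont.
have A0 : A !=set0 by exists x0; split.
have [p /set_mem [Xp pA] pmin] := EVT_min_rV A0 cA (continuous_subspaceT (@psi_cont u)).
exists p; split => // y Xy.
have [yA|yA] := leP (psi u y) (psi u x0).
  by apply: pmin; apply/mem_set; split.
by apply: (le_trans pA); exact: ltW.
Qed.

Definition Ymap u : E := projT1 (cid (psi_min_ex u)).

Lemma Y_in u : X (Ymap u).
Proof. by rewrite /Ymap; case: cid => p [] /=. Qed.

Lemma Y_min u y : X y -> psi u (Ymap u) <= psi u y.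
Proof. by rewrite /Ymap; case: cid => p [] /= _ H; exact: H. Qed.

Lemma zero_cvx : convex_function X (fun _ : E => 0 : R).
Proof. by move=> t x y _ _; rewrite convRE !mulr0 addr0. Qed.

Lemma Y_opt u z : X z -> 0 <= ip (dth (Ymap u - x0) - u) (z - Ymap u).
Proof.
move=> Xz.
have := opt_cond hgrad (x0 := x0) (a := - u) cX zero_cvx (Y_in u) ler01 _ Xz.
move=> H; have := H _; rewrite ipBl.
have H2 : forall y, X y -> ip (- u) (Ymap u) + 0 + 1 * th (Ymap u - x0) <=
    ip (- u) y + 0 + 1 * th (y - x0).
  move=> y Xy; have := Y_min u Xy; rewrite /psi !ipNl !mul1r; lra.
move=> /(_ H2); rewrite ipNl; lra.
Qed.

Lemma Y_lip : exists K : R, forall u u', `|Ymap u - Ymap u'| <= K * `|u - u'|.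
Proof.
have [c c0 Hc] := nrm_lb hn.
exists (n%:R / c ^+ 2) => u' u.
pose p := Ymap u; pose q := Ymap u'.
have h1 := Y_opt u (Y_in u').
have h2 := Y_opt u' (Y_in u).
have h3 := hmono (q - x0) (p - x0).
have e1 : (q - x0) - (p - x0) = q - p by apply/rowP => k; rewrite !mxE; ring.
rewrite e1 in h3.
rewrite -/p -/q in h1 h2.
have e2 : p - q = - (q - p) by rewrite opprB.
rewrite e2 ipNr in h2.
rewrite !ipBl in h1 h2 h3.
have h4 := ip_le (u' - u) (q - p).
rewrite ipBl in h4.
have h5 : nrm (q - p) ^+ 2 <= n%:R * `|u' - u| * `|q - p|.
  apply: (le_trans _ (le_trans (ler_norm _) h4)); lra.
have h6 := Hc (q - p).
have np0 := normr_ge0 (q - p).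
have c2 : c ^+ 2 * `|q - p| ^+ 2 <= n%:R * `|u' - u| * `|q - p|.
  apply: le_trans h5; rewrite -exprMn; apply: lerXn2r => //;
    [exact: mulr_ge0 (ltW c0) np0 | exact: nrm_ge0].
rewrite -/p -/q.
have [->|qp] := eqVneq (`|q - p|) 0.
  by rewrite mulr_ge0 // mulr_ge0 // ?invr_ge0 ?sqr_ge0.
have qp0 : 0 < `|q - p| by rewrite lt_neqAle eq_sym qp normr_ge0.
have c3 : c ^+ 2 * `|q - p| <= n%:R * `|u' - u|.
  by move: c2; rewrite [_ ^+ 2]expr2 mulrA ler_pM2r.
rewrite mulrAC ler_pdivlMr ?exprn_gt0 // mulrC; exact: c3.
Qed.


Lemma Y_cont : continuous Ymap.
Proof.
have [K HK] := Y_lip.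
apply: cont_bound => x; exists 1 => //; exists K => y _; exact: HK.
Qed.

Lemma mirror_step z z' zeta (b : R) : X z -> 0 < b ->
  ip zeta (z - z') / b <= breg th dth x0 z' z
    - breg th dth x0 (Ymap (b^-1 *: zeta + dth (z' - x0))) z
    + dual_norm nrm zeta ^+ 2 / (2 * b ^+ 2).
Proof.
move=> Xz b0.
set p := Ymap _.
have h1 := Y_opt (b^-1 *: zeta + dth (z' - x0)) Xz; rewrite -/p in h1.
have tp := three_point th dth x0 z' p z.
have lb := breg_lb hn hgrad hcvx hmono x0 z' p.
have du := dn_ub hn zeta (p - z').
set D := dual_norm nrm zeta in du *.
set r := nrm (p - z') in du lb.
have yg := young_ineq (D / b) r (ltr0Sn R 1).
have e1 : ip zeta (z - z') = ip zeta (z - p) + ip zeta (p - z').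
  by rewrite -ipDr; congr ip; apply/rowP => k; rewrite !mxE; ring.
have e2 : ip (dth (p - x0) - (b^-1 *: zeta + dth (z' - x0))) (z - p) =
   ip (dth (p - x0) - dth (z' - x0)) (z - p) - b^-1 * ip zeta (z - p).
  by rewrite -ipZl -ipBl; congr ip; apply/rowP => k; rewrite !mxE; ring.
rewrite e2 -tp in h1.
rewrite e1.
have e3 : (D / b) ^+ 2 / 2%:R = D ^+ 2 / (2 * b ^+ 2).
  by field; rewrite gt_eqF.
rewrite e3 in yg.
have h4 : ip zeta (p - z') / b <= D / b * r.
  by rewrite mulrAC ler_pM2r ?invr_gt0.
rewrite mulrDl.
have e4 : 2%:R * r ^+ 2 / 4 = r ^+ 2 / 2 by field.
rewrite e4 in yg.
have e5 : ip zeta (z - p) / b = b^-1 * ip zeta (z - p) by rewrite mulrC.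
lra.
Qed.

Variable beta : nat -> R.

Fixpoint zs (c : nat -> E) (k : nat) : E :=
  match k with
  | 0 => x0
  | k'.+1 => Ymap ((beta k')^-1 *: c k' + dth (zs c k' - x0))
  end.

Definition mrow i (M : 'M[R]_(i, n)) (j : nat) : E :=
  match (insub j : option 'I_i) with Some k => row k M | None => 0 end.

Definition zf i (M : 'M[R]_(i, n)) : E := zs (@mrow i M) i.

Lemma zs_ext c c' k : (forall j, (j < k)%N -> c j = c' j) -> zs c k = zs c' k.
Proof.
elim: k => [//|k IH] H /=.
by rewrite H // IH // => j jk; apply: H; exact: ltnW.
Qed.

Lemma mrow_mx i (F : nat -> E) j : (j < i)%N ->
  mrow (\matrix_(k < i) F k) j = F j.
Proof.
move=> ji; rewrite /mrow insubT /=.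
by apply/rowP => l; rewrite !mxE.
Qed.

Lemma zf_mx i (F : nat -> E) : zf (\matrix_(k < i) F k) = zs F i.
Proof. by apply: zs_ext => j ji; rewrite mrow_mx. Qed.

Lemma mrow_cont i j : continuous (fun M : 'M[R]_(i, n) => mrow M j).
Proof.
rewrite /mrow; case: insubP => [k _ _|_]; last exact: cst_continuous.
apply: cont_bound => M; exists 1 => //; exists 1 => M' _; rewrite mul1r.
apply: mx_norm_le => // a b; rewrite !mxE.
by have := mx_entry_le (M - M') k b; rewrite !mxE.
Qed.

Lemma zs_cont i k : continuous (fun M : 'M[R]_(i, n) => zs (@mrow i M) k).
Proof.
elim: k => [|k IH] /=; first exact: cst_continuous.
move=> M; apply: (continuous_comp (f := fun M : 'M[R]_(i, n) =>
  (beta k)^-1 *: mrow M k + dth (zs (@mrow i M) k - x0)) (g := Ymap)); last exact: Y_cont.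
apply: continuousD.
  by apply: continuousZl_tmp; exact: mrow_cont.
apply: (continuous_comp (f := fun M : 'M[R]_(i, n) => zs (@mrow i M) k - x0)
  (g := dth)); last exact: hdc.
apply: (continuousB (f := fun M0 : 'M[R]_(i, n) => zs (@mrow i M0) k) (g := fun=> x0)).
  exact: IH.
exact: cst_continuous.
Qed.

Lemma zf_meas i : borel_measurable (@zf i).
Proof.
move=> A oA; apply: sub_sigma_algebra; apply: open_comp => // M _.
exact: zs_cont.
Qed.
End Ymap.

Section Jensen.
Variables (R : realType) (n : nat).
Local Notation E := 'rV[R]_n.

Lemma cvx_add (X : set E) (g h : E -> R) : convex_function X g -> convex_function X h ->
  convex_function X (fun x => g x + h x).
Proof.
move=> cg ch t x y Xx Xy; have := cg t x y Xx Xy; have := ch t x y Xx Xy.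
rewrite !convRE /=; lra.
Qed.

Lemma jensen (X : set E) (f : E -> R) (w : nat -> R) (xs : nat -> E) m :
  convex_set X -> convex_function X f -> (forall i, 0 < w i) ->
  (forall i, (i < m)%N -> X (xs i)) -> (0 < m)%N ->
  X ((\sum_(i < m) w i)^-1 *: \sum_(i < m) w i *: xs i) /\
  (\sum_(i < m) w i) * f ((\sum_(i < m) w i)^-1 *: \sum_(i < m) w i *: xs i)
    <= \sum_(i < m) w i * f (xs i).
Proof.
move=> cX cf w0; elim: m => [//|m IH] Xs _.
have [m0|mpos] := eqVneq m 0%N.
  subst m; rewrite !big_ord1 scalerA mulVf ?gt_eqF // scale1r; split; first exact: Xs.
  by rewrite lexx.
have m0' : (0 < m)%N by rewrite lt0n.
have [IH1 IH2] := IH (fun i im => Xs i (ltnW im)) m0'.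
set S := \sum_(i < m) w i in IH1 IH2.
set V := \sum_(i < m) w i *: xs i in IH1 IH2.
have S0 : 0 < S.
  apply: (lt_le_trans (w0 0%N)).
  rewrite /S (bigD1 (Ordinal m0')) //= lerDl sumr_ge0 // => i _; exact: ltW.
rewrite !big_ord_recr /= -/S -/V.
have S'0 : 0 < S + w m by rewrite addr_gt0.
pose t := S / (S + w m).
have t0 : 0 <= t by rewrite divr_ge0 // ltW.
have t1 : t <= 1 by rewrite ler_pdivrMr // mul1r lerDl ltW.
have e : (S + w m)^-1 *: (V + w m *: xs m) = t *: (S^-1 *: V) + (1 - t) *: xs m.
  rewrite scalerA /t mulrAC mulfV ?gt_eqF // mul1r scalerDr scalerA.
  congr (_ + _); congr (_ *: _); field; rewrite ?gt_eqF //.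
rewrite e; split; first by apply: cvx_set_pt => //; exact: Xs.
have := cvx_fun_pt cf IH1 (Xs m (ltnSn m)) t0 t1.
move=> h; apply: (le_trans (ler_wpM2l (ltW S'0) h)).
have e2 : (S + w m) * (t * f (S^-1 *: V) + (1 - t) * f (xs m)) =
  S * f (S^-1 *: V) + w m * f (xs m).
  by rewrite /t; field; rewrite gt_eqF.
rewrite e2; lra.
Qed.
End Jensen.

Unset Implicit Arguments. Set Strict Implicit.

Lemma tele (R : realType) (u : nat -> R) N :
  \sum_(i < N) (u i - u i.+1) = u 0%N - u N.
Proof.
elim: N => [|N IH]; first by rewrite big_ord0 subrr.
by rewrite big_ord_recr /= IH; ring.
Qed.

Theorem proposition5 (R : realType) (n : nat) (nrm : 'rV[R]_n -> R)
  (X : set 'rV[R]_n)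
  (d : measure_display) (Om : measurableType d) (P : probability Om R)
  (G : 'rV[R]_n -> Om -> R) (dG : 'rV[R]_n -> Om -> 'rV[R]_n)
  (g : 'rV[R]_n -> R) (dg : 'rV[R]_n -> 'rV[R]_n) (L : R)
  (th : 'rV[R]_n -> R) (dth : 'rV[R]_n -> 'rV[R]_n) (h : 'rV[R]_n -> R)
  (x0 : 'rV[R]_n) (beta : nat -> R) (N : nat) :
  is_norm nrm ->
  convex_set X -> closed X -> X° !=set0 ->
  (forall w x, X x -> is_grad_within X (G ^~ w) x (dG x w)) ->
  (forall x, X x -> P.-integrable setT (fun w => (G x w)%:E) /\
                    (g x)%:E = (\int[P]_w (G x w)%:E)%E) ->
  convex_function X g ->
  (forall x, X x -> is_grad_within X g x (dg x)) ->
  (forall x x', X x -> X x' -> dual_norm nrm (dg x - dg x') <= L * nrm (x - x')) ->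
  (forall x, is_grad_within setT th x (dth x)) -> continuous dth ->
  convex_function setT th ->
  (forall x x', nrm (x - x') ^+ 2 <= ip (dth x - dth x') (x - x')) ->
  th 0 = 0 -> (forall x, th 0 <= th x) ->
  convex_function X h -> {within X, continuous h} ->
  X x0 ->
  (forall i, 2 * L <= beta i) -> (forall i, 0 < beta i) ->
  (0 < N)%N ->
  exists zf : forall i : nat, 'M[R]_(i, n) -> 'rV[R]_n,
    [/\ forall i, borel_measurable (zf i),
        forall M, zf 0%N M = x0,
        forall i M, (i < N)%N -> X (zf i M) &
    forall (ws : nat -> Om) (xs : nat -> 'rV[R]_n),
      xs 0%N = x0 ->
      (forall i, (i < N)%N ->
         is_prox X th dth h (beta i) (dG (xs i) (ws i.+1)) (xs i) x0 (xs i.+1)) ->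
      let f := fun x => g x + h x in
      let zeta := fun i : nat => dG (xs i.-1) (ws i) - dg (xs i.-1) in
      let S := \sum_(i < N) (beta i)^-1 in
      let xhat := S^-1 *: \sum_(i < N) (beta i)^-1 *: xs i.+1 in
      let V := breg th dth x0 in
      forall z, X z ->
        [/\ S * (f xhat - f z) <= \sum_(i < N) (beta i)^-1 * (f (xs i.+1) - f z),
            \sum_(i < N) (beta i)^-1 * (f (xs i.+1) - f z) <=
              V x0 z - V (xs N) z +
              \sum_(i < N) (ip (zeta i.+1) (z - xs i) / beta i +
                            dual_norm nrm (zeta i.+1) ^+ 2 / beta i ^+ 2)
          & V x0 z - V (xs N) z +
              \sum_(i < N) (ip (zeta i.+1) (z - xs i) / beta i +
                            dual_norm nrm (zeta i.+1) ^+ 2 / beta i ^+ 2) <=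
            2 * V x0 z +
              \sum_(i < N) (ip (zeta i.+1) (zf i (\matrix_(k < i) zeta k.+1) - xs i) / beta i +
                            3 / 2 * (dual_norm nrm (zeta i.+1) ^+ 2 / beta i ^+ 2))]].
Proof.
move=> hn cX clX _ _ _ cg gg lip hgrad hdc hcvx hmono th0 _ ch _ Xx0 hbL hb0 N0.
exists (fun i M => zf hn hgrad hcvx hmono th0 clX Xx0 beta (i:=i) M); split.
- by move=> i; exact: zf_meas.
- by [].
- move=> [|i] M _ //=; exact: Y_in.
move=> ws xs xs0 hprox f zeta S xhat V z Xz.
have zdef : forall i, zeta i.+1 = dG (xs i) (ws i.+1) - dg (xs i) by [].
have Xxs : forall i, (i <= N)%N -> X (xs i).
  by case=> [|i] iN; [rewrite xs0 | exact: (hprox i iN).1].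
have cf : convex_function X f by apply: cvx_add.
have b0 : forall i, 0 < (beta i)^-1 by move=> i; rewrite invr_gt0.
have P1 : S * (f xhat - f z) <= \sum_(i < N) (beta i)^-1 * (f (xs i.+1) - f z).
  have [_ J] := jensen (w := fun i => (beta i)^-1) (xs := fun i => xs i.+1) cX cf b0
    (fun i iN => Xxs i.+1 iN) N0.
  have e : \sum_(i < N) (beta i)^-1 * (f (xs i.+1) - f z) =
      \sum_(i < N) (beta i)^-1 * f (xs i.+1) - S * f z.
    by rewrite /S mulr_suml -sumrB; apply: eq_bigr => i _; ring.
  rewrite e mulrBr; move: J; rewrite /= -/S -/xhat; lra.
have step : forall i : nat, (i < N)%N ->
    (beta i)^-1 * (f (xs i.+1) - f z) <=
    V (xs i) z - V (xs i.+1) z +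
    (ip (zeta i.+1) (z - xs i) / beta i + dual_norm nrm (zeta i.+1) ^+ 2 / beta i ^+ 2).
  move=> i iN.
  have [Xp Hmin] := hprox i iN.
  have Xx := Xxs i (ltnW iN).
  move: Hmin Xp Xx; rewrite zdef /f /V.
  set x := xs i; set p := xs i.+1; set b := beta i; set u := dG x (ws i.+1).
  set zt := u - dg x => Hmin Xp Xx.
  have bpos : 0 < b := hb0 i.
  have oc := opt_cond hgrad (x0 := x0) (a := u - b *: dth (x - x0)) cX ch Xp (ltW bpos) _ Xz.
  have {oc} oc : 0 <= ip (u - b *: dth (x - x0)) (z - p) + h z - h p +
      b * ip (dth (p - x0)) (z - p).
    apply: oc => y Xy; have := Hmin y Xy.
    rewrite /breg !ipBl !ipZl !ipBr; lra.
  have tp := three_point th dth x0 x p z.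
  have sm := smooth hn cX cg gg lip Xx Xp.
  have gi := grad_ineq cX cg Xx Xz (gg x Xx).
  have lb := breg_lb hn hgrad hcvx hmono x0 x p.
  have du := dn_ub hn zt (x - p).
  rewrite (nrmB hn x p) in du.
  set D := dual_norm nrm zt in du *.
  set r := nrm (p - x) in sm lb du.
  have r0 : 0 <= r := nrm_ge0 hn _.
  have yg := young_ineq D r bpos.
  have Lr : L / 2 * r ^+ 2 <= b / 4 * r ^+ 2.
    by apply: ler_wpM2r; [exact: sqr_ge0 | have := hbL i; rewrite -/b; lra].
  have lb' : b * (r ^+ 2 / 2) <= b * breg th dth x0 x p by rewrite ler_wpM2l // ltW.
  have e1 : ip (u - b *: dth (x - x0)) (z - p) = ip (dg x) (z - x) - ip (dg x) (p - x)
      + ip zt (z - x) + ip zt (x - p) - b * ip (dth (x - x0)) (z - p).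
    rewrite /zt (ipBl u (b *: dth (x - x0)) (z - p)) (ipZl b (dth (x - x0)) (z - p)) !ipBl !ipBr; ring.
  rewrite ipBl in tp.
  have key : g p + h p - (g z + h z) <=
      ip zt (z - x) + b * (breg th dth x0 x z - breg th dth x0 p z) + D ^+ 2 / b.
    have tp' : b * (breg th dth x0 x z - breg th dth x0 p z - breg th dth x0 x p) =
       b * ip (dth (p - x0)) (z - p) - b * ip (dth (x - x0)) (z - p) by rewrite tp; ring.
    lra.
  have -> : breg th dth x0 x z - breg th dth x0 p z + (ip zt (z - x) / b + D ^+ 2 / b ^+ 2) =
    b^-1 * (ip zt (z - x) + b * (breg th dth x0 x z - breg th dth x0 p z) + D ^+ 2 / b).
    by field; rewrite gt_eqF.
  by rewrite ler_pM2l ?invr_gt0.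
have P2 : \sum_(i < N) (beta i)^-1 * (f (xs i.+1) - f z) <=
    V x0 z - V (xs N) z + \sum_(i < N)
      (ip (zeta i.+1) (z - xs i) / beta i + dual_norm nrm (zeta i.+1) ^+ 2 / beta i ^+ 2).
  apply: (le_trans (ler_sum _ (fun (i : 'I_N) _ => step i (ltn_ord i)))).
  by rewrite big_split /= (@tele _ (fun k => V (xs k) z)) xs0.
pose Z := zs hn hgrad hcvx hmono th0 clX Xx0 beta (fun j => zeta j.+1).
have ms : forall i, ip (zeta i.+1) (z - Z i) / beta i <=
    V (Z i) z - V (Z i.+1) z + dual_norm nrm (zeta i.+1) ^+ 2 / (2 * beta i ^+ 2).
  move=> i; exact: (mirror_step hn hgrad hcvx hmono th0 cX clX Xx0 (Z i) (zeta i.+1) Xz (hb0 i)).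
have reg : \sum_(i < N) ip (zeta i.+1) (z - Z i) / beta i <=
    V x0 z - V (Z N) z + \sum_(i < N) dual_norm nrm (zeta i.+1) ^+ 2 / (2 * beta i ^+ 2).
  apply: (le_trans (ler_sum _ (fun (i : 'I_N) _ => ms i))).
  by rewrite big_split /= (@tele _ (fun k => V (Z k) z)).
have e3 : forall i : 'I_N,
   ip (zeta i.+1) (z - xs i) / beta i + dual_norm nrm (zeta i.+1) ^+ 2 / beta i ^+ 2 =
   (ip (zeta i.+1) (zf hn hgrad hcvx hmono th0 clX Xx0 beta (\matrix_(k < i) zeta k.+1) - xs i) / beta i +
    3 / 2 * (dual_norm nrm (zeta i.+1) ^+ 2 / beta i ^+ 2)) +
   (ip (zeta i.+1) (z - Z i) / beta i - dual_norm nrm (zeta i.+1) ^+ 2 / (2 * beta i ^+ 2)).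
  move=> i; rewrite (zf_mx hn hgrad hcvx hmono th0 clX Xx0 beta i (fun j => zeta j.+1)) -/(Z i) !ipBr.
  by field; rewrite gt_eqF.
have VN := breg_ge0 hn hgrad hcvx hmono x0 (xs N) z.
have VZ := breg_ge0 hn hgrad hcvx hmono x0 (Z N) z.
split => //.
rewrite (eq_bigr _ (fun i _ => e3 i)) big_split /= sumrB.
rewrite -/V in VN VZ; lra.
Qed.
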